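(* Let $\vec G=(G,\alpha,w)$ be a finite magnetic graph with vertex set $V$, and let $V_1\subseteq V_0\subseteq V$, $a\in\mathbb{N}$. Then the spectrum of the $a$-th frame member of $\vec G^+_{V_1}$ identified along $V_0$ satisfies $$\operatorname{spec}\big(F_a(\vec G^+_{V_1},V_0)\big)=\operatorname{spec}\big(\vec G^+_{V_1}\big)\uplus\operatorname{spec}\big(\vec G^+_{V_0}\big)^{(a-1)}.$$
   Context: A graph $G=(V,E,\partial)$: finite disjoint sets $V,E$, incidence $\partial e=(\partial_-e,\partial_+e)\in V\times V$, inversion $e\mapsto \bar e$ with $\bar{\bar e}=e$, $\bar e\ne e$, $\partial_\pm\bar e=\partial_\mp e$; loops and multiple edges allowed; $E_v=\{e:\partial_-e=v\}$, $\deg v=|E_v|>0$. A magnetic graph $\vec G=(G,\alpha,w)$ has weights $w:E\to(0,\infty)$ with $w_{\bar e}=w_e$ and magnetic potential $\alpha:E\to\mathbb{R}/2\pi\mathbb{Z}$ with $\alpha_{\bar e}=-\alpha_e$; $\deg^w v=\sum_{e\in E_v}w_e$. The magnetic Laplacian on $\ell^2(V,\deg^w)$ (inner product $\langle f,g\rangle=\sum_v f(v)\overline{g(v)}\deg^w v$) is $(\Delta f)(v)=f(v)-\frac1{\deg^w v}\sum_{e\in E_v}w_e e^{i\alpha_e}f(\partial_+e)$. For $W\subseteq V$, the Dirichlet Laplacian is $\Delta^+_W=\iota_W^*\Delta\iota_W$ where $\iota_W:\ell^2(V\setminus W,\deg^w)\to\ell^2(V,\deg^w)$ extends by $0$; $\vec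 G^+_W$ denotes $\vec G$ with the vertices $W$ virtualised, and $\operatorname{spec}(\vec G^+_W)$ is the multiset of eigenvalues of $\Delta^+_W$ (with multiplicity); $\operatorname{spec}(\vec G)=\operatorname{spec}(\vec G^+_\emptyset)$. Frame member: $G^a$ is the disjoint union of $a$ copies $G\times\{j\}$, $j=1,\dots,a$; with $(v,i)\sim(v',j)$ iff $(v,i)=(v',j)$ or ($v=v'\in V_0$), $F_a(G,V_0)=G^a/\!\sim$ (vertices are classes, edges unchanged, incidence $e\mapsto([\partial_-e],[\partial_+e])$), and $F_a(\vec G,V_0)$ carries $w_{(e,j)}=w_e$, $\alpha_{(e,j)}=\alpha_e$. $F_a(\vec G^+_{V_1},V_0)$ is $F_a(\vec G,V_0)$ with the vertices $[(v_1,j)]$, $v_1\in V_1$, virtualised, i.e. its spectrum is that of the Dirichlet Laplacian of $F_a(\vec G,V_0)$ on these vertices. Multisets: $\uplus$ adds multiplicities; $M^{(k)}$ multiplies multiplicities by $k$ ($M^{(0)}$ is empty). *)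

(* Defs.v *)
From HB Require Import structures.
From mathcomp Require Import all_boot all_order all_algebra.
From mathcomp Require Import complex.
From mathcomp Require Import all_classical all_reals all_analysis.
Set Implicit Arguments. Unset Strict Implicit. Unset Printing Implicit Defensive.
Import Order.TTheory GRing.Theory Num.Theory.
Local Open Scope ring_scope.

Definition is_graph (V E : finType) (src tgt : E -> V) (inv : E -> E) : Prop :=
  [/\ forall e, inv (inv e) = e, forall e, inv e != e,
      forall e, src (inv e) = tgt e, forall e, tgt (inv e) = src e
    & forall v : V, exists e, src e = v ].

(* A magnetic graph: weights and magnetic potential alpha : E -> R/2piZ,
   represented by real representatives; alpha_{inv e} = - alpha_e mod 2 pi. *)
Definition is_magnetic (R : realType) (V E : finType) (src tgt : E -> V)
  (inv : E -> E) (w : E -> R) (alpha : E -> R) : Prop :=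
  [/\ is_graph src tgt inv, forall e, 0 < w e, forall e, w (inv e) = w e
    & forall e, exists k : int, alpha (inv e) = - alpha e + 2 * pi * k%:~R].

Definition expi (R : realType) (t : R) : R[i] := (cos t +i* sin t)%C.

Definition degw (R : realType) (V E : finType) (src : E -> V) (w : E -> R) (v : V) : R :=
  \sum_(e | src e == v) w e.

(* Matrix entry (u,v) of the magnetic Laplacian
   (Delta f)(u) = f(u) - 1/deg^w u * sum_{e in E_u} w_e e^{i alpha_e} f(tgt e). *)
Definition lap_entry (R : realType) (V E : finType) (src tgt : E -> V)
  (w : E -> R) (alpha : E -> R) (u v : V) : R[i] :=
  (u == v)%:R - ((degw src w u)^-1)%:C%C *
     \sum_(e | (src e == u) && (tgt e == v)) (w e)%:C%C * expi (alpha e).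

(* Dirichlet Laplacian Delta^+_W = iota_W^* Delta iota_W as a matrix, indexed by
   an enumeration of V \ W (iota_W^* is the restriction since both spaces carry
   the weight deg^w). *)
Definition dir_lap (R : realType) (V E : finType) (src tgt : E -> V)
  (w : E -> R) (alpha : E -> R) (W : {set V}) : 'M[R[i]]_#|~: W| :=
  \matrix_(i, j) lap_entry src tgt w alpha (enum_val i) (enum_val j).

(* multiplicity of lambda in spec(G^+_W): dimension of the eigenspace
   (the operator is self-adjoint, so this is also the algebraic multiplicity). *)
Definition spec_mult (R : realType) (V E : finType) (src tgt : E -> V)
  (w : E -> R) (alpha : E -> R) (W : {set V}) (lambda : R[i]) : nat :=
  \rank (eigenspace (dir_lap src tgt w alpha W) lambda).

Section Frame.
Variables (V E : finType) (a : nat) (V0 : {set V}).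

Definition fcls (x : V * 'I_a) : {set V * 'I_a} :=
  if x.1 \in V0 then [set y | y.1 == x.1] else [set x].

Definition fvert_pred (A : {set V * 'I_a}) : bool := [exists x, A == fcls x].

(* vertices of F_a(G,V0): the equivalence classes *)
Definition fvert : finType := {A : {set V * 'I_a} | fvert_pred A}.

Definition fv (x : V * 'I_a) : fvert :=
  exist fvert_pred (fcls x) (introT existsP (ex_intro (fun y => fcls x == fcls y) x (eqxx _))).

Definition fsrc (src : E -> V) (ej : E * 'I_a) : fvert := fv (src ej.1, ej.2).
Definition ftgt (tgt : E -> V) (ej : E * 'I_a) : fvert := fv (tgt ej.1, ej.2).
Definition flift (R : Type) (f : E -> R) (ej : E * 'I_a) : R := f ej.1.

Definition fW (V1 : {set V}) : {set fvert} :=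
  [set x | [exists v1 in V1, exists j, x == fv (v1, j)]].
End Frame.
Arguments fsrc {V E} a V0 src ej.
Arguments ftgt {V E} a V0 tgt ej.
Arguments flift {E} a {R} f ej.

(* Main.v *)
Require Import Defs.
From HB Require Import structures.
From mathcomp Require Import all_boot all_order all_algebra.
From mathcomp Require Import complex.
From mathcomp Require Import all_classical all_reals all_analysis.
Set Implicit Arguments. Unset Strict Implicit. Unset Printing Implicit Defensive.
Import Order.TTheory GRing.Theory Num.Theory.
Local Open Scope ring_scope.



Section Abs.
Variable F : fieldType.

Lemma direct_sub (I : finType) n (A B : I -> 'M[F]_n) :
  mxdirect (\sum_i A i) -> (forall i, B i <= A i)%MS ->
  \rank (\sum_i B i)%MS = (\sum_i \rank (B i))%N.
Proof.
move=> /mxdirect_sumsP dA sBA.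
have: mxdirect (\sum_i B i).
  apply/mxdirect_sumsP => i _; apply/eqP; rewrite -submx0.
  have := capmxS (sBA i) (sumsmxS (P := fun j => true && (j != i)) (fun j _ => sBA j)).
  by rewrite dA.
by move/mxdirectP.
Qed.
End Abs.

Section Abs2.
Variable F : fieldType.
Lemma rank_decomp (I : finType) n (T : 'M[F]_n) (m : I -> nat)
  (E : forall i, 'M[F]_(m i, n)) (A : forall i, 'M[F]_(m i)) :
  (forall i, E i *m T = A i *m E i) ->
  (1%:M <= \sum_i <<E i>>)%MS -> (\sum_i m i <= n)%N ->
  n = (\sum_i m i)%N /\ \rank T = (\sum_i \rank (A i))%N.
Proof.
move=> ET sp le.
set S := (\sum_i <<E i>>)%MS.
have rS : \rank S = n.
  by apply/eqP; rewrite eqn_leq rank_leq_col -{1}(mxrank1 F n) mxrankS.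
have h1 : (\sum_i \rank <<E i>> <= \sum_i m i)%N.
  by apply: leq_sum => i _; rewrite genmxE rank_leq_row.
have [h2 _] : (\rank S <= \sum_i \rank <<E i>> ?= iff mxdirect S)%N := mxrank_sum_leqif _.
have eqs : (\sum_i \rank <<E i>> = \sum_i m i)%N.
  by apply/eqP; rewrite eqn_leq h1 /=; apply: leq_trans le _; rewrite -[X in (X <= _)%N]rS.
have dir : mxdirect S.
  have nle : (n <= \sum_i m i)%N by rewrite -eqs; move: h2; rewrite rS.
  by apply/mxdirectP => /=; rewrite eqs rS; apply/eqP; rewrite eqn_leq nle le.
have free i : row_free (E i).
  rewrite /row_free; apply/negPn/negP => ne.
  have lt : (\rank (E i) < m i)%N by rewrite ltn_neqAle ne rank_leq_row.
  have : (\sum_j \rank <<E j>> < \sum_j m j)%N.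
    rewrite (bigD1 i) //= [X in (_ < X)%N](bigD1 i) //= genmxE.
    apply: leq_trans (_ : (\rank (E i)).+1 + \sum_(j | j != i) m j <= _)%N.
      by rewrite addSn ltnS leq_add2l; apply: leq_sum => j _; rewrite genmxE rank_leq_row.
    by rewrite leq_add2r.
  by rewrite eqs ltnn.
split. apply/eqP. rewrite eqn_leq le andbT -eqs. by move: h2; rewrite rS.

have eT : (S *m T :=: T)%MS.
  apply/eqmxP; rewrite /eqmx submxMl /=.
  by rewrite -[X in (X <= _)%MS]mul1mx submxMr.
rewrite -eT sumsmxMr (@direct_sub _ _ _ (fun i => <<E i>>%MS)) //; last first.
  by move=> i; rewrite (eqmxMr T (genmxE (E i))) ET genmxE submxMl.
apply: eq_bigr => i _.
by rewrite (eqmxMr T (genmxE (E i))) ET mxrankMfree.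
Qed.
End Abs2.

Lemma lap_sum (R : realType) (U EE : finType) (s t : EE -> U) (w al : EE -> R)
  (W : {set U}) (h : U -> R[i]) (X : U) :
  (forall Y, Y \in W -> h Y = 0) ->
  \sum_(Y in ~: W) lap_entry s t w al X Y * h Y =
  h X - ((degw s w X)^-1)%:C%C * \sum_(e | s e == X) (w e)%:C%C * expi (al e) * h (t e).
Proof.
move=> hW.
have ext : forall G : U -> R[i], (forall Y, Y \in W -> G Y = 0) ->
    \sum_(Y in ~: W) G Y = \sum_Y G Y.
  move=> G hG; rewrite [RHS](bigID (fun Y => Y \in W)) /=.
  rewrite [X in X + _]big1 ?add0r; last by move=> Y hY; exact: hG.
  by apply: eq_bigl => Y; rewrite !inE.
rewrite ext; last by move=> Y hY; rewrite hW ?mulr0.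
rewrite /lap_entry.
under eq_bigr do rewrite mulrBl.
rewrite sumrB; congr (_ - _).
  rewrite (bigD1 X) //= eqxx mul1r big1 ?addr0 // => Y /negbTE.
  by rewrite eq_sym => ->; rewrite mul0r.
under eq_bigr do rewrite -mulrA.
rewrite -mulr_sumr; congr (_ * _).
under eq_bigr do rewrite mulr_suml.
rewrite (exchange_big_dep (fun e => s e == X)) /=; last by move=> Y e _ /andP[].
apply: eq_bigr => e se.
rewrite (big_pred1 (t e)) // => Y /=.
by rewrite se eq_sym.
Qed.

Section MulLemmas.
Variables (C : comRingType) (lam : C).

Lemma mul_left (U1 U2 : finType) (W1 : {set U1}) (W2 : {set U2})
  (K : U1 -> U2 -> C) (L : U2 -> U2 -> C) i y :
  ((\matrix_(i0 < #|~: W1|, y0 < #|~: W2|) K (enum_val i0) (enum_val y0)) *m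
    (\matrix_(y0 < #|~: W2|, y1 < #|~: W2|) L (enum_val y0) (enum_val y1) - lam%:M)^T) i y
  = \sum_(X in ~: W2) K (enum_val i) X * L (enum_val y) X - lam * K (enum_val i) (enum_val y).
Proof.
rewrite !mxE.
under eq_bigr do rewrite !mxE mulrBr.
rewrite sumrB (big_enum_val (fun X => K (enum_val i) X * L (enum_val y) X)).
congr (_ - _).
rewrite (bigD1 y) //= big1 ?addr0; first by rewrite eqxx mulr1n mulrC.
by move=> y' /negbTE; rewrite eq_sym => ->; rewrite mulr0n mulr0.
Qed.

Lemma mul_right (U1 U2 : finType) (W1 : {set U1}) (W2 : {set U2})
  (K : U1 -> U2 -> C) (L : U1 -> U1 -> C) i y :
  ((\matrix_(v0 < #|~: W1|, v1 < #|~: W1|) L (enum_val v0) (enum_val v1) - lam%:M)^T *m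
   (\matrix_(i0 < #|~: W1|, y0 < #|~: W2|) K (enum_val i0) (enum_val y0))) i y
  = \sum_(v in ~: W1) L v (enum_val i) * K v (enum_val y) - lam * K (enum_val i) (enum_val y).
Proof.
rewrite !mxE.
under eq_bigr do rewrite !mxE mulrBl.
rewrite sumrB (big_enum_val (fun v => L v (enum_val i) * K v (enum_val y))).
congr (_ - _).
rewrite (bigD1 i) //= big1 ?addr0; first by rewrite eqxx mulr1n.
by move=> y' /negbTE ->; rewrite mulr0n mul0r.
Qed.
End MulLemmas.



Section FV.
Variables (V : finType) (a : nat) (V0 : {set V}).

Lemma mem_fcls (x : V * 'I_a) : x \in fcls V0 x.
Proof. by rewrite /fcls; case: ifP => _; rewrite !inE. Qed.

Lemma fv_eq (x y : V * 'I_a) :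
  (fv V0 x == fv V0 y) = (x.1 == y.1) && ((x.1 \in V0) || (x.2 == y.2)).
Proof.
rewrite -val_eqE /=.
apply/eqP/andP.
  move=> h; have := mem_fcls x; rewrite h /fcls.
  case: ifP => hy; rewrite !inE.
    by move=> /eqP e; rewrite e eqxx hy.
  by move=> /eqP ->; rewrite !eqxx orbT.
case: x y => [x1 x2] [y1 y2] /= [/eqP e]; subst y1.
case/orP => [hx | /eqP <- //].
by rewrite /fcls /= hx.
Qed.

Lemma fvP (X : fvert a V0) : exists x, X = fv V0 x.
Proof.
case: X => A hA; have /existsP [x /eqP hx] := hA.
by exists x; apply: val_inj => /=.
Qed.

Lemma fv_fW (V1 : {set V}) (u : V) (j : 'I_a) :
  (fv V0 (u, j) \in fW a V0 V1) = (u \in V1).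
Proof.
rewrite inE; apply/existsP/idP.
  by case=> v /andP [hv /existsP [k]]; rewrite fv_eq /= => /andP [/eqP -> _].
by move=> hu; exists u; rewrite hu /=; apply/existsP; exists j.
Qed.
End FV.

Section FS.
Variables (V E : finType) (a : nat) (V0 : {set V}) (src : E -> V) (M : zmodType).

Lemma fsrc_sum (Phi : E * 'I_a -> M) u j :
  \sum_(ej | fsrc a V0 src ej == fv V0 (u, j)) Phi ej =
  \sum_(e | src e == u) (if u \in V0 then \sum_k Phi (e, k) else Phi (e, j)).
Proof.
symmetry.
transitivity (\sum_(e | src e == u) \sum_(k | (u \in V0) || (k == j)) Phi (e, k)).
  apply: eq_bigr => e _; case: ifP => hu /=; first by apply: eq_bigl.
  by rewrite (big_pred1 j).
rewrite pair_big_dep; apply: eq_big => [[e k]|[e k] _] //=.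
by rewrite /fsrc fv_eq /=; case: eqP => // ->.
Qed.
End FS.

Lemma big_opt (I : finType) (F : option I -> nat) :
  (\sum_i F i = F None + \sum_i F (Some i))%N.
Proof.
rewrite (bigD1 None) //=; congr (_ + _).
rewrite (reindex_omap Some (fun o => o)) //=.
- by apply: eq_bigl => j; rewrite eqxx.
- by case.
Qed.




Section Main.
Variables (R : realType) (V E : finType) (src tgt : E -> V) (w alpha : E -> R).
Variables (V0 V1 : {set V}) (a' : nat).
Hypothesis sV : V1 \subset V0.
Local Notation a := a'.+1.
Local Notation FV := (fvert a V0).
Local Notation fs := (fsrc a V0 src).
Local Notation ft := (ftgt a V0 tgt).
Local Notation fw := (flift a w).
Local Notation fal := (flift a alpha).
Local Notation WF := (fW a V0 V1).
Local Notation g e := ((w e)%:C%C * expi (alpha e)).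
Local Notation lap := (lap_entry src tgt w alpha).
Local Notation lapF := (lap_entry fs ft fw fal).
Local Notation last := (@ord_max a').
Local Notation wk k := (widen_ord (leqnSn a') k).

Definition cov (X : FV) (v : V) : bool := [exists k, X == fv V0 (v, k)].

Lemma cov_fv t l v : cov (fv V0 (t, l)) v = (t == v).
Proof.
apply/existsP/eqP => [[k]|->]; first by rewrite fv_eq /= => /andP [/eqP].
by exists l.
Qed.

Lemma degF u j : degw fs fw (fv V0 (u, j)) =
  (if u \in V0 then a%:R else 1) * degw src w u.
Proof.
rewrite /degw (fsrc_sum V0 src (fun ej => flift a w ej)) /flift /=.
case: ifP => _; last by rewrite mul1r.
rewrite mulr_sumr; apply: eq_bigr => e _.
by rewrite sumr_const card_ord mulr_natl.
Qed.

Lemma lap_base (W : {set V}) u v : u \notin W ->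
  \sum_(v' in ~: W) lap v' v * (u == v')%:R = lap u v.
Proof.
move=> hu; rewrite (bigD1 u) /=; last by rewrite !inE.
rewrite eqxx mulr1 big1 ?addr0 // => v' /andP [_ /negbTE].
by rewrite eq_sym => ->; rewrite mulr0.
Qed.


Lemma lap_expand u v : lap u v = (u == v)%:R -
  ((degw src w u)^-1)%:C%C * \sum_(e | src e == u) g e * (tgt e == v)%:R.
Proof.
rewrite /lap_entry big_mkcondr /=; congr (_ - _ * _).
by apply: eq_bigr => e _; case: eqP => _; rewrite ?mulr1 ?mulr0.
Qed.

Lemma inter1 v X : v \notin V1 -> X \notin WF ->
  \sum_(X' in ~: WF) (cov X' v)%:R * lapF X X' =
  \sum_(v' in ~: V1) lap v' v * (cov X v')%:R.
Proof.
case: (fvP X) => [[u j] ->] hv hX.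
have hu : u \notin V1 by rewrite -(fv_fW V0 V1 u j).
under eq_bigr do rewrite mulrC.
rewrite (lap_sum fs ft fw fal (h := fun X' => (cov X' v)%:R)); last first.
  move=> Y; case: (fvP Y) => [[t l] ->]; rewrite fv_fW cov_fv.
  by case: eqP => [-> | _] //; rewrite (negbTE hv).
under [RHS]eq_bigr do rewrite cov_fv.
rewrite lap_base // cov_fv lap_expand (fsrc_sum V0 src) degF.
congr (_ - _).
rewrite /ftgt /flift /=.
under eq_bigr do under eq_bigr do rewrite cov_fv.
case: ifP => hu0; last first.
  by rewrite mul1r; congr (_ * _); apply: eq_bigr => e _; rewrite cov_fv.
under eq_bigr do rewrite sumr_const card_ord.
rewrite (eq_bigr (fun e => (a%:R : R[i]) * (g e * (tgt e == v)%:R))); last first.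
  by move=> e _; rewrite mulr_natl.
rewrite -mulr_sumr invfM rmorphM /= fmorphV rmorph_nat.
rewrite -mulrA [X in _ * X]mulrA [X in _ * (X * _)]mulrC mulrA mulrA mulVf ?mul1r //.
Qed.


Definition Kk (k : 'I_a') (v : V) (X : FV) : R[i] :=
  (X == fv V0 (v, wk k))%:R - (X == fv V0 (v, last))%:R.

Lemma Kk_fv k v t l : v \notin V0 ->
  Kk k v (fv V0 (t, l)) = (t == v)%:R * ((l == wk k)%:R - (l == last)%:R).
Proof.
move=> hv; rewrite /Kk !fv_eq /=.
by case: (t =P v) => [->|_]; rewrite ?(negbTE hv) /= ?mul1r ?mul0r ?subrr.
Qed.

Lemma sum_ind n (x : 'I_n) : \sum_(y < n) (y == x)%:R = 1 :> R[i].
Proof. by rewrite (bigD1 x) //= eqxx big1 ?addr0 // => y /negbTE ->. Qed.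

Lemma interK k v X : v \notin V0 -> X \notin WF ->
  \sum_(X' in ~: WF) Kk k v X' * lapF X X' =
  \sum_(v' in ~: V0) lap v' v * Kk k v' X.
Proof.
case: (fvP X) => [[u j] ->] hv hX.
have hu : u \notin V1 by rewrite -(fv_fW V0 V1 u j).
under eq_bigr do rewrite mulrC.
rewrite (lap_sum fs ft fw fal (h := Kk k v)); last first.
  move=> Y; case: (fvP Y) => [[t l] ->]; rewrite fv_fW Kk_fv // => ht.
  have ht0 : t \in V0 := fintype.subsetP sV t ht.
  by case: eqP => [e|_]; [rewrite -e ht0 in hv | rewrite mul0r].
rewrite Kk_fv // (fsrc_sum V0 src) degF /ftgt /flift /=.
case: ifP => hu0.
  have -> : (u == v) = false by apply/negbTE; apply: contraNneq hv => <-.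
  rewrite mul0r sub0r big1 ?mulr0 ?oppr0.
    symmetry; apply: big1 => v'; rewrite !inE => hv'.
    rewrite Kk_fv //; have -> : (u == v') = false by apply/negbTE; apply: contraNneq hv' => <-.
    by rewrite !mul0r mulr0.
  move=> e _; under eq_bigr do rewrite Kk_fv // mulrA.
  by rewrite -mulr_sumr sumrB !sum_ind subrr mulr0.
rewrite [RHS](eq_bigr (fun v' => lap v' v * (u == v')%:R * ((j == wk k)%:R - (j == last)%:R))); last first.
  by move=> v'; rewrite !inE => hv'; rewrite Kk_fv // mulrA.
rewrite -mulr_suml lap_base ?hu0 // lap_expand mul1r mulrBl; congr (_ - _).
rewrite -mulrA mulr_suml; congr (_ * _); apply: eq_bigr => e _.
by rewrite Kk_fv // mulrA.
Qed.


Variable lam : R[i].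
Local Notation NF := #|~: WF|.
Local Notation MF := (dir_lap fs ft fw fal WF).
Local Notation M1 := (dir_lap src tgt w alpha V1).
Local Notation M0 := (dir_lap src tgt w alpha V0).

Definition E1m : 'M[R[i]]_(#|~: V1|, NF) :=
  \matrix_(i0 < #|~: V1|, y0 < #|~: WF|) (fun v X => (cov X v)%:R : R[i]) (enum_val i0) (enum_val y0).
Definition Ekm k : 'M[R[i]]_(#|~: V0|, NF) :=
  \matrix_(i0 < #|~: V0|, y0 < #|~: WF|) Kk k (enum_val i0) (enum_val y0).

Lemma E1T : E1m *m (MF - lam%:M)^T = (M1 - lam%:M)^T *m E1m.
Proof.
apply/matrixP => i y; rewrite /dir_lap /E1m (mul_left lam (fun v X => (cov X v)%:R : R[i]) lapF) (mul_right lam (fun v X => (cov X v)%:R : R[i]) lap); congr (_ - _).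
apply: inter1.
  by have := enum_valP i; rewrite !inE.
by have := enum_valP y; rewrite !inE.
Qed.

Lemma EkT k : Ekm k *m (MF - lam%:M)^T = (M0 - lam%:M)^T *m Ekm k.
Proof.
apply/matrixP => i y; rewrite /dir_lap /Ekm (mul_left lam (Kk k) lapF) (mul_right lam (Kk k) lap); congr (_ - _).
apply: interK.
  by have := enum_valP i; rewrite !inE.
by have := enum_valP y; rewrite !inE.
Qed.


Definition mfun (i : option 'I_a') : nat := if i is Some _ then #|~: V0| else #|~: V1|.
Definition Ep (i : option 'I_a') : 'M[R[i]]_(mfun i, NF) :=
  match i return 'M[R[i]]_(mfun i, NF) with None => E1m | Some k => Ekm k end.
Definition Ap (i : option 'I_a') : 'M[R[i]]_(mfun i) :=
  match i return 'M[R[i]]_(mfun i) with None => (M1 - lam%:M)^T | Some k => (M0 - lam%:M)^T end.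

Lemma EpT i : Ep i *m (MF - lam%:M)^T = Ap i *m Ep i.
Proof. by case: i => [k|]; [exact: EkT | exact: E1T]. Qed.

Lemma delta_entry (y y' : 'I_NF) :
  (delta_mx 0 y : 'rV[R[i]]_NF) 0 y' = (enum_val y' == enum_val y)%:R.
Proof. by rewrite mxE eqxx /= (inj_eq enum_val_inj). Qed.

Lemma span : (1%:M <= \sum_i <<Ep i>>)%MS.
Proof.
set S := (\sum_i <<Ep i>>)%MS.
have inS i r : (row r (Ep i) <= S)%MS.
  by apply: (sumsmx_sup i) => //; rewrite genmxE row_sub.
apply/row_subP => y; rewrite row1.
case: (fvP (enum_val y)) => [[u j] hy].
have hu : u \in ~: V1.
  by have := enum_valP y; rewrite hy !finset.in_setC fv_fW.
have ev1 := enum_rankK_in hu hu.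
case hu0 : (u \in V0).
  suff -> : delta_mx 0 y = row (enum_rank_in hu u) (Ep None) by exact: (inS None (enum_rank_in hu u)).
  apply/rowP => y'; rewrite delta_entry !mxE ev1 hy.
  case: (fvP (enum_val y')) => [[t l] ->]; rewrite cov_fv fv_eq /=.
  by case: eqP => [->|]; rewrite ?hu0.
have hu' : u \in ~: V0 by rewrite !inE hu0.
have ev0 := enum_rankK_in hu' hu'.
have hl : fv V0 (u, last) \in ~: WF by rewrite finset.in_setC fv_fW -finset.in_setC.
set yl := enum_rank_in hl (fv V0 (u, last)).
have evl : enum_val yl = fv V0 (u, last) by rewrite enum_rankK_in.
have Dl : ((delta_mx 0 yl : 'rV[R[i]]_NF) <= S)%MS.
  have -> : (delta_mx 0 yl : 'rV[R[i]]_NF) = (a%:R : R[i])^-1 *: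
      (row (enum_rank_in hu u) E1m - \sum_k row (enum_rank_in hu' u) (Ekm k)).
    apply/rowP => y'; rewrite delta_entry evl !mxE summxE.
    under eq_bigr do rewrite !mxE.
    rewrite ev1 ev0.
    case: (fvP (enum_val y')) => [[t l] ->]; rewrite cov_fv fv_eq /=.
    under eq_bigr do rewrite Kk_fv ?hu0 //.
    case: (t =P u) => [->|_] /=; last first.
      by rewrite big1 ?subr0 ?mulr0 // => k _; rewrite mul0r.
    rewrite hu0 /=.
    under eq_bigr do rewrite mul1r.
    rewrite sumrB sumr_const card_ord.
    have := sum_ind l; rewrite big_ord_recr /=.
    have -> : \sum_(i < a') (l == wk i)%:R = \sum_(i < a') (wk i == l)%:R :> R[i].
      by apply: eq_bigr => i _; rewrite eq_sym.
    rewrite [(l == last)]eq_sym.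
    set x := (last == l)%:R; set s := \sum_(i < a') _ => h.
    have -> : s = 1 - x by rewrite -h addrK.
    rewrite opprB opprD opprK addrCA addNKr addrC -mulrS -[x *+ a]mulr_natl mulKf //.
  apply: scalemx_sub; apply: addmx_sub; first exact: (inS None).
  rewrite (eqmx_opp _); apply: summx_sub => k _; exact: (inS (Some k)).
case: (ltnP j a') => hj.
  have ej : j = wk (Ordinal hj) by apply: val_inj.
  have -> : (delta_mx 0 y : 'rV[R[i]]_NF) =
      row (enum_rank_in hu' u) (Ekm (Ordinal hj)) + delta_mx 0 yl.
    apply/rowP => y'; rewrite delta_entry !mxE ev0 /Kk -ej hy eqxx /= -(inj_eq enum_val_inj) evl.

    by rewrite subrK.
  by apply: addmx_sub => //; exact: (inS (Some (Ordinal hj))).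
have ej : j = last by apply: val_inj => /=; apply/eqP; rewrite eqn_leq hj -ltnS ltn_ord.
have -> : y = yl by apply: enum_val_inj; rewrite hy evl ej.
exact: Dl.
Qed.

Definition D := ({v : V | v \in ~: V1} + ('I_a' * {v : V | v \in ~: V0}))%type.
Definition fD (d : D) : FV :=
  match d with inl v => fv V0 (val v, last) | inr (k, v) => fv V0 (val v, wk k) end.

Lemma card_le : (\sum_i mfun i <= NF)%N.
Proof.
rewrite big_opt /= sum_nat_const card_ord.
have injf : injective fD.
  have nV0 (v : {v : V | v \in ~: V0}) : val v \notin V0 by have := valP v; rewrite inE.
  case=> [v|[k v]] [v'|[k' v']] /eqP; rewrite fv_eq /=.
  - by case/andP => /eqP e _; congr inl; apply: val_inj.
  - case/andP => /eqP e; rewrite e (negbTE (nV0 v')) /= => /eqP h.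
    by have /= h' := congr1 val h; have := ltn_ord k'; rewrite -h' ltnn.
  - case/andP => /eqP e; rewrite (negbTE (nV0 v)) /= => /eqP h.
    by have /= h' := congr1 val h; have := ltn_ord k; rewrite h' ltnn.
  - case/andP => /eqP e; rewrite (negbTE (nV0 v)) /= => /eqP h.
    have -> : k = k' by apply: val_inj; have := congr1 val h.
    by congr inr; congr pair; apply: val_inj.
have sub : fD @: (finset.setT : {set D}) \subset ~: WF.
  apply/fintype.subsetP => X /imsetP [d _ ->]; rewrite finset.in_setC.
  case: d => [v|[k v]] /=; rewrite fv_fW.
    by have := valP v; rewrite inE.
  have := valP v; rewrite inE; apply: contra; exact: (fintype.subsetP sV).
have := subset_leq_card sub; rewrite card_imset // finset.cardsT card_sum card_prod card_ord !card_sig.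
by [].
Qed.

Lemma main_sec : spec_mult fs ft fw fal WF lam =
  (spec_mult src tgt w alpha V1 lam + (a - 1) * spec_mult src tgt w alpha V0 lam)%N.
Proof.
have [hN hr] := rank_decomp EpT span card_le.
rewrite big_opt /= sum_nat_const card_ord in hN.
rewrite big_opt /= sum_nat_const card_ord !mxrank_tr in hr.
rewrite /spec_mult /eigenspace !mxrank_ker hr hN subn1 /=.
have h1 := rank_leq_row (M1 - lam%:M).
have h0 := rank_leq_row (M0 - lam%:M).
have h0' : (a' * \rank (M0 - lam%:M)%R <= a' * #|~: V0|)%N by rewrite leq_mul2l h0 orbT.
rewrite mulnBr.
move: h1 h0'.
set x1 := \rank _; set x0 := (a' * _)%N; set y0 := (a' * _)%N.
move=> h1 h0'.
by rewrite subnDA addnC -addnBA // addnC -addnBA.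
Qed.

End Main.

Unset Implicit Arguments.
Set Strict Implicit.
Set Printing Implicit Defensive.

Theorem proposition4p5 (R : realType) (V E : finType)
  (src tgt : E -> V) (inv : E -> E) (w : E -> R) (alpha : E -> R)
  (V0 V1 : {set V}) (a : nat) :
  is_magnetic src tgt inv w alpha ->
  V1 \subset V0 -> (1 <= a)%N ->
  forall lambda : R[i],
    spec_mult (fsrc a V0 src) (ftgt a V0 tgt) (flift a w) (flift a alpha)
      (fW a V0 V1) lambda
    = (spec_mult src tgt w alpha V1 lambda
       + (a - 1) * spec_mult src tgt w alpha V0 lambda)%N.
Proof.
move=> _ sV; case: a => [//|a'] _ lam.
exact: main_sec.
Qed.
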